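(* For all $k\in\mathbb{N}$: (a) all off-diagonal entries of $\bar L^{(k)}+(c^{(k)}-\pi^{(k)})(c^{(k)}-\pi^{(k)})^T$ are nonpositive (and thus so are all off-diagonal entries of $\bar L^{(k)}$ and of $L^{(k)}$); (b) $L^{(k)}$ is a Laplacian matrix; (c) $S^{(k)}$ is positive semidefinite.
   Context: $\rho=1+\sqrt2$; $\alpha_t=\rho^{\nu(t+1)-1}+1$ ($\nu(i)$ the largest $j$ with $2^j\mid i$). For $k\in\mathbb{N}$ and $n=2^k-1$, $\pi^{(k)}=[\alpha_0,\dots,\alpha_{n-1}]\in\mathbb{R}^n$ (column vector), and $c^{(k)}\in\mathbb{R}^n$ is defined by $c^{(1)}=[2(\rho-1)]$, $c^{(k+1)}=[\pi^{(k)},(1+\rho^{-k})(\rho^{k-1}+1),\rho c^{(k)}-(\rho-1-\rho^{-k})\pi^{(k)}]$. Let $d^{(k)}=c^{(k)}-\pi^{(k)}$ and $N^{(k)}=\bar L^{(k)}+d^{(k)}(d^{(k)})^T$. Define $\bar L^{(1)}=[2(\rho-1)]$ and, in block form with blocks of sizes $n,1,n$, $$\bar L^{(k+1)}=\begin{bmatrix}N^{(k)}&-\rho^k d^{(k)}&0\\-\rho^k (d^{(k)})^T&(\rho^{k-1}+1)(\rho^{k+1}+1)&-\rho(\pi^{(k)})^T\\0&-\rho\pi^{(k)}&\rho^2N^{(k)}\end{bmatrix}-d^{(k+1)}(d^{(k+1)})^T.$$ Define $L^{(k)}=\begin{bmatrix}\bar L^{(k)}&-c^{(k)}\\-(c^{(k)})^T&2(\rho^k-1)\end{bmatrix}\in\mathbb{R}^{(n+1)\times(n+1)}$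 and $S^{(k)}=\begin{bmatrix}1/\sqrt2&(-e_1+e_{n+1})^T\\-e_1+e_{n+1}&L^{(k)}\end{bmatrix}\in\mathbb{R}^{(n+2)\times(n+2)}$, where $e_1,e_{n+1}$ are standard basis vectors of $\mathbb{R}^{n+1}$. A Laplacian matrix is a symmetric matrix whose off-diagonal entries are nonpositive and whose row sums are all $0$. *)

(* Defs.v *)
From HB Require Import structures.
From mathcomp Require Import all_boot all_order all_algebra.
Set Implicit Arguments. Unset Strict Implicit. Unset Printing Implicit Defensive.
Import Order.TTheory GRing.Theory Num.Theory.
Local Open Scope ring_scope.

Section Defs.
Variable R : rcfType.

Definition rho : R := 1 + Num.sqrt 2.

Definition nu (i : nat) : nat := logn 2 i.

Definition alpha (t : nat) : R := rho ^ ((nu t.+1)%:Z - 1) + 1.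

Definition dim (k : nat) : nat := (2 ^ k).-1.

(* Vectors / matrices of level k are represented as functions on nat,
   only the indices < dim k are meaningful. *)

Definition piv (k : nat) (i : nat) : R := alpha i.

(* c^(k), defined for k >= 1 *)
Fixpoint cv (k : nat) : nat -> R :=
  match k with
  | 0 => fun _ => 0
  | k'.+1 =>
    if k' == 0%N then (fun _ => 2 * (rho - 1)) else
    let n := dim k' in
    fun i => if (i < n)%N then piv k' i
             else if i == n then (1 + rho ^- k') * (rho ^+ k'.-1 + 1)
             else rho * cv k' (i - n.+1)%N - (rho - 1 - rho ^- k') * piv k' (i - n.+1)%N
  end.

Definition dv (k : nat) (i : nat) : R := cv k i - piv k i.

(* the block matrix [[N, -rho^k d, 0], [-rho^k d^T, D, -rho pi^T], [0, -rho pi, rho^2 N]]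
   at level k (block sizes n,1,n with n = dim k), given N = N^(k) *)
Definition blk (k : nat) (N : nat -> nat -> R) (i j : nat) : R :=
  let n := dim k in
  if (i < n)%N then
    if (j < n)%N then N i j
    else if j == n then - rho ^+ k * dv k i
    else 0
  else if i == n then
    if (j < n)%N then - rho ^+ k * dv k j
    else if j == n then (rho ^+ k.-1 + 1) * (rho ^+ k.+1 + 1)
    else - rho * piv k (j - n.+1)%N
  else
    if (j < n)%N then 0
    else if j == n then - rho * piv k (i - n.+1)%N
    else rho ^+ 2 * N (i - n.+1)%N (j - n.+1)%N.

(* \bar L^(k), defined for k >= 1 *)
Fixpoint Lbarf (k : nat) : nat -> nat -> R :=
  match k with
  | 0 => fun _ _ => 0
  | k'.+1 =>
    if k' == 0%N then (fun _ _ => 2 * (rho - 1)) else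
    let Nk' := fun i j => Lbarf k' i j + dv k' i * dv k' j in
    fun i j => blk k' Nk' i j - dv k'.+1 i * dv k'.+1 j
  end.

Definition Nf (k : nat) (i j : nat) : R := Lbarf k i j + dv k i * dv k j.

Definition Nmx (k : nat) : 'M[R]_(dim k) := \matrix_(i, j) Nf k i j.
Definition Lbarmx (k : nat) : 'M[R]_(dim k) := \matrix_(i, j) Lbarf k i j.

Definition Lmx (k : nat) : 'M[R]_((dim k).+1) :=
  \matrix_(i, j)
    (if ((i < dim k) && (j < dim k))%N then Lbarf k i j
     else if (i < dim k)%N then - cv k i
     else if (j < dim k)%N then - cv k j
     else 2 * (rho ^+ k - 1)).

Definition evec (k : nat) : 'cV[R]_((dim k).+1) :=
  \col_i ((i == ord_max)%:R - (i == ord0)%:R).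

Definition Smx (k : nat) : 'M[R]_(1 + (dim k).+1) :=
  block_mx (1 / Num.sqrt 2)%:M (evec k)^T (evec k) (Lmx k).

End Defs.

Definition offdiag_nonpos (R : numDomainType) (m : nat) (A : 'M[R]_m) : Prop :=
  forall i j : 'I_m, i != j -> A i j <= 0.

Definition laplacian (R : numDomainType) (m : nat) (A : 'M[R]_m) : Prop :=
  [/\ A^T = A, offdiag_nonpos A & forall i : 'I_m, \sum_(j < m) A i j = 0].

Definition psd (R : numDomainType) (m : nat) (A : 'M[R]_m) : Prop :=
  A^T = A /\ forall x : 'cV[R]_m, 0 <= (x^T *m A *m x) 0 0.

(* Main.v *)
Require Import Defs.
From HB Require Import structures.
From mathcomp Require Import all_boot all_order all_algebra.
From mathcomp Require Import ring lra zify.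
Import Order.TTheory GRing.Theory Num.Theory.
Set Implicit Arguments. Unset Strict Implicit. Unset Printing Implicit Defensive.
Local Open Scope ring_scope.
Local Notation dim := Defs.dim.

Section Aux.
Variable R : rcfType.
Local Notation rh := (rho R).
Local Notation s2 := (Num.sqrt (2:R)).

Lemma s2_sq : s2 ^+ 2 = 2.
Proof. by rewrite sqr_sqrtr // ler0n. Qed.

Lemma s2_gt0 : 0 < s2.
Proof. by rewrite sqrtr_gt0 ltr0n. Qed.

Lemma rho_sq : rh ^+ 2 = 2 * rh + 1.
Proof. rewrite /rho; have := s2_sq; move=> h. ring: h. Qed.

Lemma rho_gt1 : 1 < rh.
Proof. rewrite /rho; have := s2_gt0; lra. Qed.

Lemma rho_gt0 : 0 < rh.
Proof. have := rho_gt1; lra. Qed.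

Lemma rho_neq0 : rh != 0.
Proof. by rewrite gt_eqF // rho_gt0. Qed.

Lemma rhoX_gt0 n : 0 < rh ^+ n.
Proof. exact: exprn_gt0 rho_gt0. Qed.

Lemma rhoX_neq0 n : rh ^+ n != 0.
Proof. by rewrite gt_eqF // rhoX_gt0. Qed.

Lemma rhoV : rh^-1 = rh - 2.
Proof.
apply: (mulfI rho_neq0); rewrite mulfV ?rho_neq0 //.
have h := rho_sq. ring: h.
Qed.

Lemma alpha_gt0 t : 0 < alpha R t.
Proof. rewrite /alpha; have := exprz_gt0 ((nu t.+1)%:Z - 1) rho_gt0; lra. Qed.

Lemma alpha0 : alpha R 0 = s2.
Proof.
rewrite /alpha /nu logn1 /= exprN1 rhoV /rho; ring.
Qed.

Lemma logn_shift k t : (t.+1 < 2 ^ k)%N -> logn 2 (2 ^ k + t.+1) = logn 2 t.+1.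
Proof.
move=> ht.
have [q cq eq] := pfactor_coprime (isT : prime 2) (ltn0Sn t).
set a := logn 2 t.+1 in eq *.
have qpos : (0 < q)%N by case: q cq eq => [|q] //; rewrite mul0n.
have ak : (a < k)%N.
  rewrite -(ltn_exp2l _ _ (isT : (1 < 2)%N)).
  have : (2 ^ a <= t.+1)%N by rewrite eq leq_pmull.
  lia.
have -> : (2 ^ k + t.+1 = (2 ^ (k - a) + q) * 2 ^ a)%N.
  by rewrite eq mulnDl -expnD subnK // ltnW.
rewrite logn_Gauss ?pfactorK // coprime2n oddD oddX.
have : odd q by rewrite -coprime2n.
move=> ->; case: (k - a)%N (subn_gt0 a k) => [|m]; rewrite ?ak //.
Qed.

Lemma dimS k : dim k.+1 = (dim k + (dim k).+1)%N.
Proof. rewrite /dim expnS; have := expn_gt0 2 k; lia. Qed.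

Lemma dim_gt0 k : (0 < dim k.+1)%N.
Proof. rewrite /dim expnS; have := expn_gt0 2 k; lia. Qed.

Lemma alpha_mid k : alpha R (dim k.+1) = rh ^+ k + 1.
Proof.
rewrite /alpha /nu /dim prednK ?expn_gt0 // pfactorK //.
by rewrite -addn1 PoszD addrK exprnP.
Qed.

Lemma alpha_shift k t : (t < dim k)%N -> alpha R ((dim k).+1 + t) = alpha R t.
Proof.
move=> ht; rewrite /alpha /nu -addnS /dim prednK ?expn_gt0 // logn_shift //.
move: ht; rewrite /dim; lia.
Qed.


Lemma sum_split n (f : nat -> R) :
  \sum_(0 <= j < n + n.+1) f j =
  \sum_(0 <= j < n) f j + f n + \sum_(0 <= j < n) f (n.+1 + j)%N.
Proof.
rewrite !big_mkord big_split_ord big_ord_recl /= -addrA; congr (_ + (_ + _)).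
- by rewrite addn0.
- by apply: eq_bigr => i _; rewrite /= /bump /= add1n addnS.
Qed.

Lemma sum_dimS k (f : nat -> R) :
  \sum_(0 <= j < dim k.+1) f j =
  \sum_(0 <= j < dim k) f j + f (dim k) + \sum_(0 <= j < dim k) f ((dim k).+1 + j)%N.
Proof. by rewrite dimS sum_split. Qed.

Lemma piv_eq k i : piv R k i = alpha R i.
Proof. by []. Qed.

Lemma cv_S k i : cv R k.+2 i =
  if (i < dim k.+1)%N then piv R k.+1 i
  else if i == dim k.+1 then (1 + rh ^- k.+1) * (rh ^+ k + 1)
  else rh * cv R k.+1 (i - (dim k.+1).+1) - (rh - 1 - rh ^- k.+1) * piv R k.+1 (i - (dim k.+1).+1).
Proof. by []. Qed.

Lemma cv_low k i : (i < dim k.+1)%N -> cv R k.+2 i = alpha R i.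
Proof. by move=> hi; rewrite /= hi. Qed.

Lemma dv_low k i : (i < dim k.+1)%N -> dv R k.+2 i = 0.
Proof. by move=> hi; rewrite /dv cv_low // subrr. Qed.

Lemma dv_mid k : dv R k.+2 (dim k.+1) = rh ^- k.+1 * (rh ^+ k + 1).
Proof.
rewrite /dv /= ltnn eqxx piv_eq alpha_mid; ring.
Qed.

Lemma dv_high k t : (t < dim k.+1)%N ->
  dv R k.+2 ((dim k.+1).+1 + t) = rh * dv R k.+1 t + rh ^- k.+1 * alpha R t.
Proof.
move=> ht; rewrite /dv piv_eq alpha_shift //.
have h1 : ((dim k.+1).+1 + t < dim k.+1)%N = false by apply/negbTE; rewrite -leqNgt; lia.
have h2 : ((dim k.+1).+1 + t == dim k.+1) = false by apply/negbTE; lia.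
rewrite cv_S h1 h2 addKn piv_eq; ring.
Qed.

Lemma cv1 i : cv R 1 i = 2 * (rh - 1).
Proof. by []. Qed.

Lemma dv1 : dv R 1 0 = s2.
Proof. rewrite /dv cv1 piv_eq alpha0 /rho; ring. Qed.

Lemma dim1 : dim 1 = 1%N.
Proof. by []. Qed.

Lemma Lbar1 i j : Lbarf R 1 i j = 2 * (rh - 1).
Proof. by []. Qed.

Lemma Nf_rec k i j : Nf R k.+2 i j = blk k.+1 (Nf R k.+1) i j.
Proof. rewrite /Nf /=; rewrite subrK //. Qed.

Lemma Lbar_rec k i j : Lbarf R k.+2 i j = blk k.+1 (Nf R k.+1) i j - dv R k.+2 i * dv R k.+2 j.
Proof. by []. Qed.


Variant idx_spec (n : nat) : nat -> Type :=
 | IdxL i of (i < n)%N : idx_spec n i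
 | IdxM : idx_spec n n
 | IdxH t of (t < n)%N : idx_spec n (n.+1 + t)%N.

Lemma idxP n i : (i < n + n.+1)%N -> idx_spec n i.
Proof.
move=> hi; case: (ltnP i n) => h1; first exact: IdxL.
case: (eqVneq i n) => [->|h2]; first exact: IdxM.
have -> : i = (n.+1 + (i - n.+1))%N by lia.
apply: IdxH; lia.
Qed.

Section Blk.
Variables (k : nat) (N : nat -> nat -> R).
Local Notation n := (dim k).
Lemma blk_LL i j : (i < n)%N -> (j < n)%N -> blk k N i j = N i j.
Proof. by move=> hi hj; rewrite /blk hi hj. Qed.
Lemma blk_LM i : (i < n)%N -> blk k N i n = - rh ^+ k * dv R k i.
Proof. by move=> hi; rewrite /blk hi ltnn eqxx. Qed.
Lemma blk_LH i t : (i < n)%N -> blk k N i (n.+1 + t) = 0.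
Proof.
move=> hi; rewrite /blk hi.
have -> : (n.+1 + t < n)%N = false by lia.
by have -> : (n.+1 + t == n) = false by lia.
Qed.
Lemma blk_ML j : (j < n)%N -> blk k N n j = - rh ^+ k * dv R k j.
Proof. by move=> hj; rewrite /blk hj ltnn eqxx. Qed.
Lemma blk_MM : blk k N n n = (rh ^+ k.-1 + 1) * (rh ^+ k.+1 + 1).
Proof. by rewrite /blk ltnn eqxx. Qed.
Lemma blk_MH t : blk k N n (n.+1 + t) = - rh * piv R k t.
Proof.
rewrite /blk ltnn eqxx.
have -> : (n.+1 + t < n)%N = false by lia.
have -> : (n.+1 + t == n) = false by lia.
by rewrite addKn.
Qed.
Lemma blk_HL t j : (j < n)%N -> blk k N (n.+1 + t) j = 0.
Proof.
move=> hj; rewrite /blk hj.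
have -> : (n.+1 + t < n)%N = false by lia.
by have -> : (n.+1 + t == n) = false by lia.
Qed.
Lemma blk_HM t : blk k N (n.+1 + t) n = - rh * piv R k t.
Proof.
rewrite /blk ltnn eqxx.
have -> : (n.+1 + t < n)%N = false by lia.
have -> : (n.+1 + t == n) = false by lia.
by rewrite addKn.
Qed.
Lemma blk_HH t u : blk k N (n.+1 + t) (n.+1 + u) = rh ^+ 2 * N t u.
Proof.
rewrite /blk.
have -> : (n.+1 + t < n)%N = false by lia.
have -> : (n.+1 + t == n) = false by lia.
have -> : (n.+1 + u < n)%N = false by lia.
have -> : (n.+1 + u == n) = false by lia.
by rewrite !addKn.
Qed.
End Blk.

Lemma sum_alpha k : \sum_(0 <= j < dim k.+1) alpha R j = rh ^+ k.+1 - 1.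
Proof.
elim: k => [|k IH].
  by rewrite dim1 big_nat1 alpha0 /rho; ring.
rewrite sum_dimS alpha_mid IH.
under eq_big_nat => t /andP[_ ht] do rewrite alpha_shift //.
rewrite IH !exprS; have h := rho_sq; ring: h.
Qed.


Lemma dv_ge0 k i : (i < dim k.+1)%N -> 0 <= dv R k.+1 i.
Proof.
elim: k i => [|k IH] i.
  rewrite dim1 ltnS leqn0 => /eqP ->; rewrite dv1; exact: ltW s2_gt0.
rewrite dimS => hi; case: (idxP hi) => [j hj||t ht].
- by rewrite dv_low.
- rewrite dv_mid; apply: mulr_ge0; first by rewrite invr_ge0 ltW // rhoX_gt0.
  by apply: addr_ge0; [exact: ltW (rhoX_gt0 _)|].
- rewrite dv_high //; apply: addr_ge0; apply: mulr_ge0.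
  + exact: ltW rho_gt0.
  + exact: IH.
  + by rewrite invr_ge0 ltW // rhoX_gt0.
  + exact: ltW (alpha_gt0 _).
Qed.

Lemma sum_dv k : \sum_(0 <= j < dim k.+1) dv R k.+1 j = rh ^+ k.+1 - 1.
Proof.
elim: k => [|k IH].
  by rewrite dim1 big_nat1 dv1 /rho; ring.
rewrite sum_dimS dv_mid.
under eq_big_nat => t /andP[_ ht] do rewrite dv_low //.
under [X in _ + _ + X]eq_big_nat => t /andP[_ ht] do rewrite dv_high //.
rewrite big1_eq big_split /= -!mulr_sumr IH sum_alpha.
have hx := rhoX_neq0 k.
have e : rh ^- k.+1 = (rh - 2) / rh ^+ k by rewrite exprS invfM rhoV.
rewrite e !exprS; have h := rho_sq; field: h.
by [].
Qed.


Lemma Nf_off k i j : (i < dim k.+1)%N -> (j < dim k.+1)%N -> i != j ->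
  Nf R k.+1 i j <= 0.
Proof.
elim: k i j => [|k IH] i j.
  by rewrite dim1 !ltnS !leqn0 => /eqP -> /eqP ->.
have hr := ltW rho_gt0; have hrk := ltW (rhoX_gt0 k.+1).
rewrite dimS Nf_rec => hi hj; case: (idxP hi) hj => [i' hi'||t ht];
  move=> hj; case: (idxP hj) => [j' hj'||u hu] hne //.
- by rewrite blk_LL // IH.
- by rewrite blk_LM // mulNr oppr_le0 mulr_ge0 // dv_ge0.
- by rewrite blk_LH.
- by rewrite blk_ML // mulNr oppr_le0 mulr_ge0 // dv_ge0.
- by rewrite eqxx in hne.
- by rewrite blk_MH mulNr oppr_le0 mulr_ge0 // ltW // alpha_gt0.
- by rewrite blk_HL.
- by rewrite blk_HM mulNr oppr_le0 mulr_ge0 // ltW // alpha_gt0.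
- rewrite blk_HH; apply: mulr_ge0_le0; first exact: sqr_ge0.
  apply: IH => //; apply: contra hne => /eqP ->; by [].
Qed.

Lemma Lbar_sym k i j : Lbarf R k i j = Lbarf R k j i.
Proof.
elim: k i j => [|[|k] IH] i j; [by []|by []|].
rewrite !Lbar_rec [dv R k.+2 j * _]mulrC; congr (_ - _).
have NS : forall i j, Nf R k.+1 i j = Nf R k.+1 j i.
  by move=> a b; rewrite /Nf IH mulrC.
rewrite /blk; set n := dim k.+1.
case: (ltnP i n) => hi; case: (ltnP j n) => hj.
- exact: NS.
- reflexivity.
- reflexivity.
- case: (eqVneq i n) => [ei|ni]; case: (eqVneq j n) => [ej|nj].
  + reflexivity.
  + reflexivity.
  + reflexivity.
  + by rewrite NS.
Qed.
Lemma Lbar_row k i : (i < dim k.+1)%N ->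
  \sum_(0 <= j < dim k.+1) Lbarf R k.+1 i j = cv R k.+1 i.
Proof.
elim: k i => [|k IH] i.
  by rewrite dim1 ltnS leqn0 => /eqP ->; rewrite big_nat1.
have NR : forall i, (i < dim k.+1)%N ->
    \sum_(0 <= j < dim k.+1) Nf R k.+1 i j = cv R k.+1 i + dv R k.+1 i * (rh ^+ k.+1 - 1).
  move=> a ha; rewrite /Nf big_split /= IH // -mulr_sumr sum_dv //.
under eq_big_nat => j _ do rewrite Lbar_rec.
rewrite sumrB -mulr_sumr sum_dv sum_dimS.
rewrite dimS => hi; case: (idxP hi) => [a ha||t ht].
- under eq_big_nat => j /andP[_ hj] do rewrite blk_LL //.
  under [X in _ + _ + X - _]eq_big_nat => j /andP[_ hj] do rewrite blk_LH //.
  rewrite blk_LM // big1_eq NR // dv_low // cv_low // /dv /piv; ring.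
- under eq_big_nat => j /andP[_ hj] do rewrite blk_ML //.
  under [X in _ + _ + X - _]eq_big_nat => j /andP[_ hj] do rewrite blk_MH //.
  rewrite blk_MM -!mulr_sumr sum_dv sum_alpha dv_mid cv_S ltnn eqxx /=.
  have hx : rh ^+ k != 0 by apply: rhoX_neq0.
  have e : rh ^- k.+1 = (rh - 2) / rh ^+ k by rewrite exprS invfM rhoV.
  rewrite e !exprS; have h : rh ^+ 2 = 2 * rh + 1 by apply: rho_sq.
  by field: h.
- under eq_big_nat => j /andP[_ hj] do rewrite blk_HL //.
  under [X in _ + _ + X - _]eq_big_nat => j /andP[_ hj] do rewrite blk_HH //.
  rewrite blk_HM big1_eq -mulr_sumr NR // dv_high // cv_S.
  have -> : ((dim k.+1).+1 + t < dim k.+1)%N = false by lia.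
  have -> : ((dim k.+1).+1 + t == dim k.+1) = false by lia.
  rewrite addKn /dv /piv.
  have hx : rh ^+ k != 0 by apply: rhoX_neq0.
  have e : rh ^- k.+1 = (rh - 2) / rh ^+ k by rewrite exprS invfM rhoV.
  rewrite e !exprS; have h : rh ^+ 2 = 2 * rh + 1 by apply: rho_sq.
  by field: h.
Qed.
End Aux.

Section Aux2.
Variable R : rcfType.
Local Notation rh := (rho R).
Local Notation s2 := (Num.sqrt (2:R)).

Lemma cv_eq k i : cv R k i = dv R k i + alpha R i.
Proof. by rewrite /dv /piv subrK. Qed.

Lemma sum_cv k : \sum_(0 <= j < dim k.+1) cv R k.+1 j = 2 * (rh ^+ k.+1 - 1).
Proof.
under eq_big_nat => j _ do rewrite cv_eq.
rewrite big_split /= sum_dv sum_alpha; ring.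
Qed.

Lemma cv_ge0 k i : (i < dim k.+1)%N -> 0 <= cv R k.+1 i.
Proof.
move=> hi; rewrite cv_eq; apply: addr_ge0; first exact: dv_ge0.
exact: ltW (alpha_gt0 _ _).
Qed.

Lemma cv0 k : s2 <= cv R k.+1 0.
Proof.
case: k => [|k].
  rewrite cv1 /rho; have := s2_gt0 R; lra.
rewrite cv_low ?dim_gt0 // alpha0 //.
Qed.

End Aux2.

Section Gen.
Variable F : realFieldType.

Lemma le_sum1 (T : finType) (f : T -> F) a :
  (forall i, 0 <= f i) -> f a <= \sum_i f i.
Proof.
move=> h; rewrite (bigD1 a) //= lerDl; exact: sumr_ge0.
Qed.

Lemma le_sum2 (T : finType) (f : T -> F) a b : a != b ->
  (forall i, 0 <= f i) -> f a + f b <= \sum_i f i.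
Proof.
move=> hab h; rewrite (bigD1 a) //= lerD2l (bigD1 b) 1?eq_sym //= lerDl.
exact: sumr_ge0.
Qed.

Lemma quadE m (A : 'M[F]_m) (y : 'cV[F]_m) :
  (y^T *m A *m y) 0 0 = \sum_i \sum_j y i 0 * A i j * y j 0.
Proof.
rewrite mxE; under eq_bigr => j _ do rewrite mxE mulr_suml.
rewrite [RHS]exchange_big; apply: eq_bigr => i _; apply: eq_bigr => j _.
by rewrite mxE.
Qed.

Lemma lap_quad m (A : 'M[F]_m) (y : 'cV[F]_m) p q :
  A^T = A -> offdiag_nonpos A -> (forall i, \sum_j A i j = 0) -> p != q ->
  - A p q * (y p 0 - y q 0) ^+ 2 <= (y^T *m A *m y) 0 0.
Proof.
move=> hT hoff hrow hpq.
have Asym : forall i j, A i j = A j i by move=> i j; rewrite -{1}hT mxE.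
have hcol : forall j, \sum_i A i j = 0.
  by move=> j; under eq_bigr => i _ do rewrite Asym; exact: hrow.
set g := fun i j => - A i j * (y i 0 - y j 0) ^+ 2.
have g0 : forall i j, 0 <= g i j.
  move=> i j; rewrite /g; case: (eqVneq i j) => [->|hij].
    by rewrite subrr expr0n /= mulr0.
  by apply: mulr_ge0; [rewrite oppr_ge0; exact: hoff|exact: sqr_ge0].
have key : \sum_i \sum_j g i j = 2 * (y^T *m A *m y) 0 0.
  rewrite quadE mulr_sumr.
  have e1 : forall i, \sum_j g i j =
      2 * \sum_j (y i 0 * A i j * y j 0) - y i 0 ^+ 2 * \sum_j A i j
      - \sum_j A i j * y j 0 ^+ 2.
    move=> i; rewrite mulr_sumr mulr_sumr -!sumrB; apply: eq_bigr => j _.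
    rewrite /g; ring.
  under eq_bigr => i _ do rewrite e1 hrow mulr0 subr0.
  rewrite sumrB exchange_big /=.
  have -> : \sum_j \sum_i A i j * y j 0 ^+ 2 = 0.
    by apply: big1 => j _; rewrite -mulr_suml hcol mul0r.
  by rewrite subr0.
have h1 : g p q + g q p <= \sum_i \sum_j g i j.
  apply: le_trans (le_sum2 hpq (fun i => sumr_ge0 _ (fun j _ => g0 i j))).
  by apply: lerD; apply: le_sum1.
move: h1; rewrite key /g (Asym q p).
have -> : (y q 0 - y p 0) ^+ 2 = (y p 0 - y q 0) ^+ 2 by ring.
lra.
Qed.

End Gen.

Unset Implicit Arguments.
Lemma sum_delta (F : ringType) n (m : 'I_n) (f : 'I_n -> F) :
  \sum_i (i == m)%:R * f i = f m.
Proof.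
rewrite (bigD1 m) //= eqxx mul1r big1 ?addr0 // => i /negbTE ->.
by rewrite mul0r.
Qed.

Lemma addmxE00 (F : ringType) m n (M N : 'M[F]_(m,n)) i j :
  (M + N) i j = M i j + N i j.
Proof. by rewrite mxE. Qed.

Theorem lemma14 (R : rcfType) (k : nat) (hk : (0 < k)%N) :
  [/\ offdiag_nonpos (Nmx R k),
      offdiag_nonpos (Lbarmx R k),
      offdiag_nonpos (Lmx R k),
      laplacian (Lmx R k)
    & psd (Smx R k)].
Proof.
case: k hk => [//|k] _.
have hN : offdiag_nonpos (Nmx R k.+1).
  by move=> i j hij; rewrite mxE; apply: Nf_off.
have hLb : offdiag_nonpos (Lbarmx R k.+1).
  move=> i j hij; rewrite mxE.
  have := Nf_off R (ltn_ord i) (ltn_ord j) hij.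
  have := mulr_ge0 (dv_ge0 R (ltn_ord i)) (dv_ge0 R (ltn_ord j)).
  rewrite /Nf; lra.
have hL : offdiag_nonpos (Lmx R k.+1).
  move=> i j hij; rewrite mxE.
  case: (ltnP i (Defs.dim k.+1)) => hi; case: (ltnP j (Defs.dim k.+1)) => hj /=.
  - by have := hLb (Ordinal hi) (Ordinal hj) hij; rewrite mxE.
  - by rewrite oppr_le0 cv_ge0.
  - by rewrite oppr_le0 cv_ge0.
  - exfalso; move: hij; have := ltn_ord i; have := ltn_ord j.
    move=> hj' hi'; have eij : i = j by apply: val_inj => /=; lia.
    by rewrite eij eqxx.
have hT : (Lmx R k.+1)^T = Lmx R k.+1.
  apply/matrixP => i j; rewrite !mxE Lbar_sym.
  case: (ltnP i (Defs.dim k.+1)) => hi; case: (ltnP j (Defs.dim k.+1)) => hj //=.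
have hrow : forall i, \sum_(j < (Defs.dim k.+1).+1) Lmx R k.+1 i j = 0.
  move=> i; rewrite big_ord_recr !mxE.
  have -> : (@ord_max (Defs.dim k.+1) < Defs.dim k.+1)%N = false by rewrite ltnn.
  rewrite andbF.
  have ew : forall j : 'I_(Defs.dim k.+1),
      (widen_ord (leqnSn (Defs.dim k.+1)) j < Defs.dim k.+1)%N = true.
    by move=> j /=; exact: ltn_ord.
  under eq_bigr => j _ do rewrite mxE ew andbT.
  case: (ltnP i (Defs.dim k.+1)) => hi.
    rewrite -(big_mkord xpredT (fun j => Lbarf R k.+1 i j)) Lbar_row //.
    exact: subrr.
  have hs : \sum_(j < Defs.dim k.+1) - cv R k.+1 j = - (2 * (rho R ^+ k.+1 - 1)).
    by rewrite -(big_mkord xpredT (fun j => - cv R k.+1 j)) sumrN sum_cv.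
  rewrite hs; exact: addNr.
have hlap : laplacian (Lmx R k.+1) by split.
split => //; split.
  by rewrite /Smx tr_block_mx trmxK tr_scalar_mx hT.
move=> x; rewrite -[x]vsubmxK /Smx.
set a := usubmx x; set y := dsubmx x; set e := evec R k.+1.
rewrite tr_col_mx mul_row_block mul_row_col !mulmxDl !addmxE00.
set t := (e^T *m y) 0 0.
have e1 : (a^T *m (1 / Num.sqrt (2:R))%:M *m a) 0 0 = (1 / Num.sqrt 2) * (a 0 0 * a 0 0).
  by rewrite mul_mx_scalar -scalemxAl mxE mxE big_ord1 mxE.
have e2 : (y^T *m e *m a) 0 0 = t * a 0 0.
  rewrite -[y^T *m e]trmxK trmx_mul trmxK.
  by rewrite mxE big_ord1 mxE.
have e3 : (a^T *m e^T *m y) 0 0 = a 0 0 * t.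
  by rewrite -mulmxA mxE big_ord1 mxE.
have et : t = y ord_max 0 - y ord0 0.
  rewrite /t mxE.
  under eq_bigr => i _ do rewrite !mxE mulrBl.
  by rewrite sumrB !sum_delta /y !mxE.
have hq := lap_quad y (p := ord_max) (q := ord0) hT hL hrow.
have hne : (@ord_max (Defs.dim k.+1)) != ord0.
  by apply/eqP => /(congr1 val) /= h; have := dim_gt0 k; rewrite h.
have hL0 : Lmx R k.+1 ord_max ord0 = - cv R k.+1 0.
  rewrite mxE; case: ifP => [/andP[]|_]; first by rewrite ltnn.
  case: ifP => [|_]; first by rewrite ltnn.
  case: ifP => [_|]; first reflexivity.
  by rewrite dim_gt0.
move: (hq hne); rewrite hL0 opprK -et => hq'.
rewrite e1 e2 e3.
have hc := cv0 R k.
have s0 := s2_gt0 R.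
have hs : Num.sqrt (2:R) ^+ 2 = 2 by apply: s2_sq.
have ht2 : 0 <= t ^+ 2 := sqr_ge0 t.
have h1 : Num.sqrt 2 * t ^+ 2 <= cv R k.+1 0 * t ^+ 2 by apply: ler_wpM2r.
have E : 1 / Num.sqrt 2 * (a 0 0 * a 0 0) + t * a 0 0 + a 0 0 * t + Num.sqrt 2 * t ^+ 2
   = (a 0 0 + Num.sqrt 2 * t) ^+ 2 / Num.sqrt 2.
  by field: hs; rewrite gt_eqF.
have h2 : 0 <= (a 0 0 + Num.sqrt 2 * t) ^+ 2 / Num.sqrt (2:R).
  by apply: divr_ge0; [exact: sqr_ge0|exact: ltW].
lra.
Qed.
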